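(* Let $P$ be a poset, $\mathcal F$ a standard collection of upsets and $\mathcal I$ a standard collection of downsets of $P$ (treated as disjoint sets), and suppose there exists a canonical extension $e:P\to C$ of $P$ with respect to $(\mathcal F,\mathcal I)$. Order $\mathcal F$ by reverse inclusion and $\mathcal I$ by inclusion, let $e_{\mathcal F}(p)=p^\uparrow$ and $e_{\mathcal I}(p)=p^\downarrow$, and let $R_l\subseteq\mathcal F\times\mathcal I$ be defined by $F\,R_l\,I$ iff $e_{\mathcal F}^{-1}(F^\uparrow)\cap e_{\mathcal I}^{-1}(I^\downarrow)\ne\emptyset$ (equivalently, $F\cap I\neq\emptyset$). Then $(e_{\mathcal F},e_{\mathcal I},R_l)$ is a Galois polarity.
   Context: For an element $q$ of a poset, $q^\uparrow=\{q'\ge q\}$, $q^\downarrow=\{q'\le q\}$; $e^{-1}(Z)=\{p:e(p)\in Z\}$. A collection of upsets (downsets) of $P$ is standard if it contains all $p^\uparrow$ (all $p^\downarrow$). A completion is an order-embedding into a complete lattice. A canonical extension of $P$ w.r.t. $(\mathcal F,\mathcal I)$ is a completion $e:P\to C$ such that every $z\in C$ satisfies $z=\bigvee\{\bigwedge e[F]:F\in\mathcal F,\bigwedge e[F]\le z\}=\bigwedge\{\bigvee e[I]:I\in\mathcal I,\bigvee e[I]\ge z\}$, and such that $\bigwedge e[F]\le\bigvee e[I]$ with $F\in\mathcal F,I\in\mathcal I$ implies $F\cap I\ne\emptyset$. A meet-extension is an order-embedding $e:P\to X$ with $x=\bigwedge e[e^{-1}(x^\uparrow)]$ for all $x$; a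 join-extension dually. A Galois polarity is a triple $(e_X,e_Y,R)$ where $e_X:P\to X$ is a meet-extension, $e_Y:P\to Y$ a join-extension, $X,Y$ disjoint, $R\subseteq X\times Y$, such that there is a quasiorder $\preceq$ on $X\cup Y$ with: for $x\in X,y\in Y$, $x\preceq y$ iff $xRy$; and, writing $X\uplus_\preceq Y$ for the poset induced by $\preceq$ and $\iota_X,\iota_Y$ for the maps induced by inclusion, $\iota_X$ and $\iota_Y$ are order-embeddings, $\iota_X\circ e_X=\iota_Y\circ e_Y$, for every $S\subseteq P$ with $\bigwedge e_X[S]$ existing in $X$ we have $\iota_X(\bigwedge e_X[S])=\bigwedge\iota_X\circ e_X[S]$, and for every $T\subseteq P$ with $\bigvee e_Y[T]$ existing in $Y$ we have $\iota_Y(\bigvee e_Y[T])=\bigvee\iota_Y\circ e_Y[T]$. *)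

(* Defs.v *)
Set Implicit Arguments.

Section Order.
Variable T : Type.
Variable le : T -> T -> Prop.

Definition is_preorder : Prop :=
  (forall x, le x x) /\ (forall x y z, le x y -> le y z -> le x z).

Definition is_partial_order : Prop :=
  is_preorder /\ (forall x y, le x y -> le y x -> x = y).

(* m is a greatest lower bound of S (in a preorder this is exactly the
   statement that the class of m is the meet in the induced poset) *)
Definition is_glb (S : T -> Prop) (m : T) : Prop :=
  (forall s, S s -> le m s) /\ (forall z, (forall s, S s -> le z s) -> le z m).

Definition is_lub (S : T -> Prop) (m : T) : Prop :=
  (forall s, S s -> le s m) /\ (forall z, (forall s, S s -> le s z) -> le m z).

Definition is_complete_lattice : Prop :=
  is_partial_order /\
  (forall S : T -> Prop, exists m, is_glb S m) /\
  (forall S : T -> Prop, exists m, is_lub S m).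

Definition is_upset (U : T -> Prop) : Prop := forall x y, U x -> le x y -> U y.
Definition is_downset (D : T -> Prop) : Prop := forall x y, D y -> le x y -> D x.

Definition up (q : T) : T -> Prop := fun q' => le q q'.
Definition down (q : T) : T -> Prop := fun q' => le q' q.
End Order.

Definition image {A B : Type} (f : A -> B) (S : A -> Prop) : B -> Prop :=
  fun b => exists a, S a /\ b = f a.
Definition preimage {A B : Type} (f : A -> B) (Z : B -> Prop) : A -> Prop :=
  fun a => Z (f a).

Definition order_embedding {A B : Type} (leA : A -> A -> Prop)
  (leB : B -> B -> Prop) (f : A -> B) : Prop :=
  forall a a', leA a a' <-> leB (f a) (f a').

Definition completion {P C : Type} (leP : P -> P -> Prop) (leC : C -> C -> Prop)
  (e : P -> C) : Prop :=
  is_complete_lattice leC /\ order_embedding leP leC e.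

Definition canonical_extension {P C : Type} (leP : P -> P -> Prop)
  (F I : (P -> Prop) -> Prop) (leC : C -> C -> Prop) (e : P -> C) : Prop :=
  completion leP leC e /\
  (forall z : C,
     is_lub leC (fun a => exists U, F U /\ is_glb leC (image e U) a /\ leC a z) z) /\
  (forall z : C,
     is_glb leC (fun b => exists D, I D /\ is_lub leC (image e D) b /\ leC z b) z) /\
  (forall U D a b, F U -> I D -> is_glb leC (image e U) a ->
     is_lub leC (image e D) b -> leC a b -> exists p, U p /\ D p).

Definition meet_extension {P X : Type} (leP : P -> P -> Prop)
  (leX : X -> X -> Prop) (e : P -> X) : Prop :=
  is_partial_order leX /\ order_embedding leP leX e /\
  forall x, is_glb leX (image e (preimage e (up leX x))) x.

Definition join_extension {P Y : Type} (leP : P -> P -> Prop)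
  (leY : Y -> Y -> Prop) (e : P -> Y) : Prop :=
  is_partial_order leY /\ order_embedding leP leY e /\
  forall y, is_lub leY (image e (preimage e (down leY y))) y.

(* Galois polarity; X and Y are made disjoint by working in the sum type X + Y.
   The quasiorder q on X + Y induces the poset X ⊎_q Y (its quotient); the
   conditions on iota_X, iota_Y are stated on representatives. *)
Definition galois_polarity {P X Y : Type} (leP : P -> P -> Prop)
  (leX : X -> X -> Prop) (leY : Y -> Y -> Prop)
  (eX : P -> X) (eY : P -> Y) (R : X -> Y -> Prop) : Prop :=
  meet_extension leP leX eX /\ join_extension leP leY eY /\
  exists q : X + Y -> X + Y -> Prop,
    is_preorder q /\
    (forall x y, q (inl x) (inr y) <-> R x y) /\
    order_embedding leX q inl /\
    order_embedding leY q inr /\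
    (forall p, q (inl (eX p)) (inr (eY p)) /\ q (inr (eY p)) (inl (eX p))) /\
    (forall (S : P -> Prop) (m : X), is_glb leX (image eX S) m ->
        is_glb q (image (fun p => inl (eX p)) S) (inl m)) /\
    (forall (T : P -> Prop) (j : Y), is_lub leY (image eY T) j ->
        is_lub q (image (fun p => inr (eY p)) T) (inr j)).

Definition Fset {P : Type} (F : (P -> Prop) -> Prop) := {U : P -> Prop | F U}.
Definition Iset {P : Type} (I : (P -> Prop) -> Prop) := {D : P -> Prop | I D}.

Definition leF {P : Type} (F : (P -> Prop) -> Prop) (U V : Fset F) : Prop :=
  forall p, proj1_sig V p -> proj1_sig U p.
Definition leI {P : Type} (I : (P -> Prop) -> Prop) (D E : Iset I) : Prop :=
  forall p, proj1_sig D p -> proj1_sig E p.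

Definition eF {P : Type} (leP : P -> P -> Prop) (F : (P -> Prop) -> Prop)
  (hF : forall p, F (up leP p)) (p : P) : Fset F := exist _ (up leP p) (hF p).
Definition eI {P : Type} (leP : P -> P -> Prop) (I : (P -> Prop) -> Prop)
  (hI : forall p, I (down leP p)) (p : P) : Iset I := exist _ (down leP p) (hI p).

Definition Rl {P : Type} (leP : P -> P -> Prop) (F I : (P -> Prop) -> Prop)
  (hF : forall p, F (up leP p)) (hI : forall p, I (down leP p))
  (U : Fset F) (D : Iset I) : Prop :=
  exists p, preimage (@eF P leP F hF) (up (@leF P F) U) p /\
            preimage (@eI P leP I hI) (down (@leI P I) D) p.

(* Main.v *)
Require Import Defs.
From Stdlib Require Import FunctionalExtensionality PropExtensionality ProofIrrelevance.

Lemma sig_pred_ext {P : Type} (F : (P -> Prop) -> Prop) (U V : {W : P -> Prop | F W}) :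
  (forall p, proj1_sig U p -> proj1_sig V p) ->
  (forall p, proj1_sig V p -> proj1_sig U p) -> U = V.
Proof.
  destruct U as [u hu], V as [v hv]; simpl; intros H1 H2.
  assert (u = v) by (apply functional_extensionality; intro p;
    apply propositional_extensionality; split; auto).
  subst v. f_equal. apply proof_irrelevance.
Qed.

Definition qrel {P : Type} (F I : (P -> Prop) -> Prop)
  (a b : Fset F + Iset I) : Prop :=
  match a, b with
  | inl U, inl V => @leF P F U V
  | inr D, inr E => @leI P I D E
  | inl U, inr D => exists p, proj1_sig U p /\ proj1_sig D p
  | inr D, inl U => forall (V : Fset F) (E : Iset I),
      (exists p, proj1_sig V p /\ proj1_sig D p) ->
      (exists p, proj1_sig U p /\ proj1_sig E p) ->
      exists p, proj1_sig V p /\ proj1_sig E p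
  end.

Theorem mainTheorem8 (P : Type) (leP : P -> P -> Prop)
  (F I : (P -> Prop) -> Prop)
  (hPo : is_partial_order leP)
  (hFup : forall U, F U -> is_upset leP U)
  (hIdown : forall D, I D -> is_downset leP D)
  (hF : forall p, F (up leP p))
  (hI : forall p, I (down leP p))
  (hCE : exists (C : Type) (leC : C -> C -> Prop) (e : P -> C),
           canonical_extension leP F I leC e) :
  galois_polarity leP (@leF P F) (@leI P I) (@eF P leP F hF) (@eI P leP I hI)
    (@Rl P leP F I hF hI).
Proof.
  destruct hPo as [[hrefl htrans] hanti].
  assert (UP : forall U : Fset F, forall x y, proj1_sig U x -> leP x y -> proj1_sig U y).
  { intros [u hu] x y; simpl. apply (hFup u hu). }
  assert (DN : forall D : Iset I, forall x y, proj1_sig D y -> leP x y -> proj1_sig D x).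
  { intros [d hd] x y; simpl. apply (hIdown d hd). }
  split; [|split].
  -
    split; [|split].
    + split; [split|].
      * intros x p; auto.
      * intros x y z H1 H2 p Hp; auto.
      * intros x y H1 H2; apply sig_pred_ext; auto.
    + intros a a'; unfold leF, eF, up; simpl; split.
      * intros H p Hp; eauto.
      * intros H; apply H; auto.
    + intros x; split.
      * intros s [p [Hp ->]]; exact Hp.
      * intros z Hz r Hr. apply (Hz (eF leP F hF r)).
        -- exists r; split; [|reflexivity]. unfold preimage, up, leF, eF; simpl.
           intros r' Hr'; eauto.
        -- unfold eF, up; simpl; auto.
  -
    split; [|split].
    + split; [split|].
      * intros x p; auto.
      * intros x y z H1 H2 p Hp; auto.
      * intros x y H1 H2; apply sig_pred_ext; auto.
    + intros a a'; unfold leI, eI, down; simpl; split.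
      * intros H p Hp; eauto.
      * intros H; apply H; auto.
    + intros x; split.
      * intros s [p [Hp ->]]; exact Hp.
      * intros z Hz r Hr. apply (Hz (eI leP I hI r)).
        -- exists r; split; [|reflexivity]. unfold preimage, down, leI, eI; simpl.
           intros r' Hr'; eauto.
        -- unfold eI, down; simpl; auto.
  - exists (qrel F I).
    split; [split|split; [|split; [|split; [|split; [|split]]]]].
    + intros [U|D]; simpl; unfold leF, leI; auto.
    + intros [U|D] [V|E] [W|G]; simpl; unfold leF, leI.
      * intros; auto.
      * intros H1 [p [Hp1 Hp2]]; eauto.
      * intros [p [Hp1 Hp2]] H2 w Hw.
        destruct (H2 U (eI leP I hI w)) as [a [Ha1 Ha2]].
        -- exists p; auto.
        -- exists w; split; auto. unfold eI, down; simpl; auto.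
        -- unfold eI, down in Ha2; simpl in Ha2. eauto.
      * intros [p [Hp1 Hp2]] H2; exists p; auto.
      * intros H1 H2 V' E' HV HE. apply (H1 V' E' HV).
        destruct HE as [p [? ?]]; exists p; auto.
      * intros H1 [p [Hp1 Hp2]] d Hd.
        destruct (H1 (eF leP F hF d) G) as [a [Ha1 Ha2]].
        -- exists d; split; auto. unfold eF, up; simpl; auto.
        -- exists p; auto.
        -- unfold eF, up in Ha1; simpl in Ha1. eauto.
      * intros H1 H2 V' E' HV HE. apply (H2 V' E'); auto.
        destruct HV as [p [? ?]]; exists p; auto.
      * intros; auto.
    + intros U D; simpl; unfold Rl, preimage, up, down, leF, leI, eF, eI; simpl; split.
      * intros [p [H1 H2]]; exists p; split; intros r Hr; eauto.
      * intros [p [H1 H2]]; exists p; split; [apply H1|apply H2]; apply hrefl.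
    + intros a a'; simpl; tauto.
    + intros a a'; simpl; tauto.
    + intros p; simpl; split.
      * exists p; unfold eF, eI, up, down; simpl; auto.
      * intros V E [a [Ha1 Ha2]] [b [Hb1 Hb2]].
        unfold eF, eI, up, down in *; simpl in *.
        exists b; split; eauto.
    + intros S m [Hlb Hgr]; split.
      * intros s [p [Hp ->]]; simpl. apply Hlb. exists p; auto.
      * intros [U|D] Hz; simpl.
        -- apply Hgr. intros s [p [Hp ->]]. apply (Hz (inl (eF leP F hF p))).
           exists p; auto.
        -- intros V E HV HE.
           assert (HS : forall p, S p -> proj1_sig V p).
           { intros p Hp.
             destruct (Hz (inl (eF leP F hF p)) (ex_intro _ p (conj Hp eq_refl))
                        V (eI leP I hI p) HV) as [a [Ha1 Ha2]].
             - exists p; unfold eF, eI, up, down; simpl; auto.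
             - unfold eI, down in Ha2; simpl in Ha2; eauto. }
           assert (HmV : @leF P F V m).
           { apply Hgr. intros s [p [Hp ->]]. unfold leF, eF, up; simpl.
             intros r Hr; eauto. }
           destruct HE as [p [Hp1 Hp2]]. exists p; split; auto.
    + intros T j [Hub Hle]; split.
      * intros s [p [Hp ->]]; simpl. apply Hub. exists p; auto.
      * intros [U|D] Hz; simpl.
        -- intros V E HV HE.
           assert (HT : forall p, T p -> proj1_sig E p).
           { intros p Hp.
             destruct (Hz (inr (eI leP I hI p)) (ex_intro _ p (conj Hp eq_refl))
                        (eF leP F hF p) E) as [a [Ha1 Ha2]].
             - exists p; unfold eF, eI, up, down; simpl; auto.
             - exact HE.
             - unfold eF, up in Ha1; simpl in Ha1; eauto. }
           assert (HjE : @leI P I j E).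
           { apply Hle. intros s [p [Hp ->]]. unfold leI, eI, down; simpl.
             intros r Hr; eauto. }
           destruct HV as [p [Hp1 Hp2]]. exists p; split; auto.
        -- apply Hle. intros s [p [Hp ->]]. apply (Hz (inr (eI leP I hI p))).
           exists p; auto.
Qed.
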